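(* Let $q$ be a prime power and $r$ odd. In any hyperbolic avsp $\{S_1,\dots,S_{q^{\frac{r+1}{2}}}\}$ of ${\rm PG}(r+1,q)$ with respect to a hyperplane $H$, any two distinct members $S_i,S_j$ meet in exactly one point, and $\Pi_i=S_i\cap H$, $\Pi_j=S_j\cap H$ meet in exactly one point. Consequently, if $r\equiv -1\pmod 4$, no hyperbolic avsp of ${\rm PG}(r+1,q)$ exists.
   Context: Affine vector space partition (avsp): given a hyperplane $H$ of ${\rm PG}(r+1,q)$, an avsp (with respect to $H$) is a set $\mathcal P$ of subspaces, none contained in $H$, such that every point of ${\rm PG}(r+1,q)\setminus H$ lies in exactly one member of $\mathcal P$. Hyperbolic avsp ($r$ odd): an avsp $\mathcal P=\{S_1,\dots,S_N\}$ of ${\rm PG}(r+1,q)$ with respect to $H$, where $N=q^{\frac{r+1}{2}}$ and every $S_i$ is a $\frac{r+1}{2}$-dimensional projective subspace, such that the sets $\Pi_i=S_i\cap H$ are $N$ generators (i.e. $\frac{r-1}{2}$-dimensional subspaces contained in the quadric) of a non-degenerate hyperbolic quadric $\mathcal Q^+(r,q)\subset H$ with: (1) each $\Pi_i$ disjoint from a fixed generator $\Pi$ of $\mathcal Q^+(r,q)$; (2) distinct $S_i,S_j$ meet in at most one point, and distinct $\Pi_i,\Pi_j$ meet in at most one point; (3) if $|\Pi_i\cap\Pi_j|=1$, then $\langle S_i,S_j\rangle\cap\mathcal Q^+(r,q)=\mathcal Q^+(r,q)$. *)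

(* Defs.v *)
(* projective geometry PG(r+1,q) modelled on the vector space
   'rV[F]_(r.+2) over a finite field F with #|F| = q.  Projective subspaces of
   projective dimension d are vector subspaces ({vspace _}) of dimension d+1;
   points are 1-dimensional subspaces. *)
From HB Require Import structures.
From mathcomp Require Import all_boot all_order all_algebra.
Set Implicit Arguments. Unset Strict Implicit. Unset Printing Implicit Defensive.
Import Order.TTheory GRing.Theory.
Local Open Scope ring_scope.

Section Defs.
Variables (F : finFieldType) (n : nat).
Local Notation vT := 'rV[F]_n.

(* The hyperbolic quadratic form in canonical form w.r.t. the basis b of H:
   Q(sum x_i b_i) = x_0 x_1 + x_2 x_3 + ... + x_(m-2) x_(m-1). *)
Definition hypQ (m : nat) (b : m.-tuple vT) (v : vT) : F :=
  let x := [seq coord b i v | i <- enum 'I_m] in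
  \sum_(i < m | ~~ odd i) x`_i * x`_i.+1.

Definition is_generator (H : {vspace vT}) (m : nat) (b : m.-tuple vT)
    (U : {vspace vT}) : Prop :=
  (U <= H)%VS /\ \dim U = m./2 /\ (forall v, v \in U -> hypQ b v = 0).

(* Hyperbolic avsp of PG(r+1,q) (n = r+2) w.r.t. the hyperplane H, the
   non-degenerate hyperbolic quadric of H being given by the basis b of H
   (in which its form is canonical), the fixed generator being Pi, and the
   members being S i (i < N = q^((r+1)/2)); Pi_i = S i :&: H. *)
Definition hyperbolic_avsp (r : nat) (H : {vspace vT}) (b : r.+1.-tuple vT)
    (Pi : {vspace vT}) (N : nat) (S : 'I_N -> {vspace vT}) : Prop :=
  n = r.+2 /\ \dim H = r.+1 /\ basis_of H b /\ is_generator H b Pi /\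
  (forall i j, S i = S j -> i = j) /\
  (forall i, ~~ (S i <= H)%VS) /\
  (forall v, v \notin H -> exists! i, v \in S i) /\
  (forall i, \dim (S i) = (r.+1)./2.+1 /\ is_generator H b (S i :&: H)%VS
             /\ (S i :&: H :&: Pi = 0)%VS) /\
  (forall i j, i != j ->
     (\dim (S i :&: S j) <= 1)%N /\
     (\dim ((S i :&: H) :&: (S j :&: H)) <= 1)%N /\
     (\dim ((S i :&: H) :&: (S j :&: H)) = 1%N ->
        forall v, v \in H -> hypQ b v = 0 -> v \in (S i + S j)%VS)).

End Defs.

(* Main.v *)
Require Import Defs.
From HB Require Import structures.
From mathcomp Require Import all_boot all_order all_algebra.
From mathcomp Require Import fingroup perm ring zify.
Set Implicit Arguments. Unset Strict Implicit. Unset Printing Implicit Defensive.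
Import Order.TTheory GRing.Theory.
Local Open Scope ring_scope.
Lemma inv_fix m (s : 'S_m) : odd m -> (s^-1)%g = s -> exists i, s i = i.
Proof.
move=> om ss; case: (pickP (fun i => s i == i)) => [i /eqP|nf]; first by exists i.
have ssi i : s (s i) = i by rewrite -{1}ss permK.
pose A := [set i : 'I_m | (i < s i)%N].
have eC : ~: A = s @: A.
  apply/setP=> i; rewrite !inE; apply/idP/imsetP.
    move=> h; exists (s i); last by rewrite ssi.
    rewrite inE ssi ltn_neqAle leqNgt h andbT.
    apply/negP => /eqP e; have := nf i; by rewrite /= (val_inj e) eqxx.
  by case=> j; rewrite inE => hj ->; rewrite ssi -leqNgt ltnW.
have := cardsC A; rewrite eC card_imset; last exact: perm_inj.
move=> e; have : odd (#|A| + #|A|) by rewrite e card_ord.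
by rewrite addnn odd_double.
Qed.

Lemma det_alt_odd (R : comNzRingType) m (M : 'M[R]_m) : odd m ->
  (forall i, M i i = 0) -> (forall i j, M j i = - M i j) -> \det M = 0.
Proof.
move=> om M0 MN.
pose t (s : 'S_m) := (-1) ^+ s * \prod_i M i (s i).
have tV s : t (s^-1)%g = - t s.
  rewrite /t odd_permV (reindex_inj (@perm_inj _ s)) /=.
  under eq_bigr => i _ do rewrite permK MN.
  rewrite prodrN. rewrite cardT size_enum_ord -[(-1) ^+ m]signr_odd om expr1.
  by rewrite mulN1r mulrN.
rewrite /determinant -/t.
rewrite (bigID (fun s : 'S_m => (s^-1)%g == s)) /=.
rewrite big1 ?add0r; last first.
  move=> s /eqP /(inv_fix om) [i si]; rewrite /t (bigD1 i) //= si M0.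
  by rewrite mul0r mulr0.
rewrite (bigID (fun s : 'S_m => (enum_rank s < enum_rank (s^-1)%g)%N)) /=.
rewrite [X in _ + X](reindex_inj (@invg_inj _)) /=.
rewrite -[X in _ + X]big_filter -[X in X + _]big_filter.
set L := filter _ _.
suff -> : filter (fun s : 'S_m => ((s^-1)^-1 != s^-1)%g && ~~ (enum_rank (s^-1)%g < enum_rank (s^-1)^-1)%g%N) (index_enum _) = L.
  rewrite -big_split /= big1 // => s _.
  by have := tV s; rewrite /t => ->; rewrite addrN.
apply: eq_filter => s /=; rewrite invgK eq_sym; case: eqP => [->|/eqP ne] //=.
rewrite -leqNgt leq_eqVlt val_eqE (inj_eq enum_rank_inj).
by rewrite eq_sym (negPf ne).
Qed.

Section Form.
Variables (F : finFieldType) (n : nat) (m : nat).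
Local Notation vT := 'rV[F]_n.
Variable (b : m.-tuple vT).

Definition cs (v : vT) (j : nat) : F := nth 0 [seq coord b i v | i <- enum 'I_m] j.

Lemma cs_ge v j : (m <= j)%N -> cs v j = 0.
Proof. by move=> hj; rewrite /cs; apply: nth_default; rewrite size_map size_enum_ord. Qed.
Lemma csL a u v j : cs (a *: u + v) j = a * cs u j + cs v j.
Proof.
case: (ltnP j m) => hj.
  rewrite /cs !(nth_map (Ordinal hj)) ?size_enum_ord // -?enumT ?size_enum_ord //.
  by rewrite raddfD /= linearZ.
by rewrite !cs_ge // mulr0 addr0. Qed.
Lemma foo : True. Proof. done.
Qed.

Lemma csD u v j : cs (u + v) j = cs u j + cs v j.
Proof. by rewrite -[u]scale1r csL mul1r scale1r. Qed.



Lemma cs_lt v (j : 'I_m) : cs v j = coord b j v.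
Proof. by rewrite /cs (nth_map j) ?size_enum_ord // ?nth_ord_enum // -?enumT ?size_enum_ord. Qed.

Lemma hypQE v : hypQ b v = \sum_(i < m | ~~ odd i) cs v i * cs v i.+1.
Proof. by []. Qed.

Definition betaQ u v := \sum_(i < m | ~~ odd i) (cs u i * cs v i.+1 + cs v i * cs u i.+1).

Lemma QD u v : hypQ b (u + v) = hypQ b u + hypQ b v + betaQ u v.
Proof.
rewrite !hypQE /betaQ -!big_split /=; apply: eq_bigr => i _.
rewrite !csD; ring.
Qed.

Lemma betaC u v : betaQ u v = betaQ v u.
Proof. by apply: eq_bigr => i _; rewrite addrC. Qed.

Lemma betaL a x y z : betaQ (a *: x + y) z = a * betaQ x z + betaQ y z.
Proof.
rewrite /betaQ mulr_sumr -big_split /=; apply: eq_bigr => i _.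
rewrite !csL; ring.
Qed.

Lemma betaR a x y z : betaQ z (a *: x + y) = a * betaQ z x + betaQ z y.
Proof. by rewrite betaC betaL !(betaC z). Qed.

Lemma betaDl x y z : betaQ (x + y) z = betaQ x z + betaQ y z.
Proof. by rewrite -[x]scale1r betaL mul1r scale1r. Qed.

Lemma betaBr x y z : betaQ z (x - y) = betaQ z x - betaQ z y.
Proof. by rewrite addrC -scaleN1r betaR mulN1r addrC. Qed.

Lemma betaself v : betaQ v v = hypQ b v *+ 2.
Proof.
rewrite hypQE /betaQ -sumrMnl; apply: eq_bigr => i _; ring.
Qed.

Lemma ts_beta (U : {vspace vT}) x y : (forall v, v \in U -> hypQ b v = 0) ->
  x \in U -> y \in U -> betaQ x y = 0.
Proof.
move=> hU xU yU; have := QD x y.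
by rewrite !hU ?memvD // !add0r => <-.
Qed.


Lemma cs_basis (h j : nat) : free b -> (h < m)%N -> cs (b`_h) j = (h == j)%:R.
Proof.
move=> fb hm; case: (ltnP j m) => hj; last first.
  by rewrite cs_ge //; case: eqP => // e; move: hm; rewrite e ltnNge hj.
have -> : j = Ordinal hj by [].
have -> : h = Ordinal hm by [].
by rewrite cs_lt coord_free.
Qed.

Lemma sum_delta (f : nat -> F) (h : nat) :
  \sum_(i < m | ~~ odd i) ((h == i :> nat)%:R * f i) = if (h < m)%N && ~~ odd h then f h else 0.
Proof.
rewrite (bigID (fun i : 'I_m => val i == h)) /= [X in _ + X]big1 ?addr0; last first.
  by move=> i /andP[_ /negPf]; rewrite eq_sym => ->; rewrite mul0r.
case: ifP => [/andP[hm ho] | hf].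
  rewrite (big_pred1 (Ordinal hm)) /=; first by rewrite eqxx mul1r.
  move=> i /=; apply/andP/eqP => [[_ /eqP e]|->]; first exact: val_inj.
  by rewrite /= ho eqxx.
rewrite big_pred0 // => i; apply/negbTE/andP => -[oi /eqP e].
by move: hf; rewrite -e ltn_ord oi.
Qed.

Lemma beta_even (h : nat) v : free b -> (h < m)%N -> ~~ odd h -> betaQ (b`_h) v = cs v h.+1.
Proof.
move=> fb hm ho; rewrite /betaQ.
rewrite (eq_bigr (fun i : 'I_m => (h == i :> nat)%:R * cs v i.+1)); last first.
  move=> i oi; rewrite !cs_basis //.
  have -> : (h == i.+1) = false by apply/negP => /eqP e; move: ho; rewrite e /= oi.
  by rewrite mulr0 addr0.
by rewrite (sum_delta (fun i => cs v i.+1)) hm ho.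
Qed.

Lemma beta_odd (h : nat) v : free b -> (h < m)%N -> odd h -> betaQ (b`_h) v = cs v h.-1.
Proof.
move=> fb hm ho; rewrite /betaQ.
rewrite (eq_bigr (fun i : 'I_m => (h.-1 == i :> nat)%:R * cs v i)); last first.
  move=> i oi; rewrite !cs_basis //; case: eqP => [e|_].
    by move: ho; rewrite e (negPf oi).
  rewrite mul0r add0r mulrC; congr (_ * _); congr (_%:R).
  by case: h hm ho => //= h' _ _; rewrite eqSS.
rewrite (sum_delta (cs v)); case: h hm ho => //= h' hm ho.
by rewrite (ltnW hm) /= ho.
Qed.

Lemma beta_nondeg (H : {vspace vT}) v : ~~ odd m -> basis_of H b -> v \in H ->
  (forall h, h \in H -> betaQ h v = 0) -> v = 0.
Proof.
move=> om hb vH hv.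
have fb := basis_free hb.
have bH h : (h < m)%N -> b`_h \in H.
  by move=> hm; apply: (basis_mem hb); apply: mem_nth; rewrite size_tuple.
have c0 (j : nat) : (j < m)%N -> cs v j = 0.
  move=> jm; case oj: (odd j).
    have jm' : (j.-1 < m)%N by rewrite (leq_ltn_trans (leq_pred j)).
    have := hv _ (bH _ jm'); rewrite beta_even //; last first.
      by case: j oj {jm jm'} => //= j ->.
    by case: j oj {jm jm'}.
  have jm' : (j.+1 < m)%N.
    rewrite ltn_neqAle jm andbT; apply/eqP => e; move: om; by rewrite -e /= oj.
  by have := hv _ (bH _ jm'); rewrite beta_odd //= oj.
rewrite (coord_basis hb vH); apply: big1 => i _.
by rewrite -cs_lt c0 ?scale0r.
Qed.

End Form.

Lemma alt_even (F : fieldType) (vT : vectType F) (W : {vspace vT}) (phi : vT -> vT -> F) :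
 (forall a x y z, phi (a *: x + y) z = a * phi x z + phi y z) ->
 (forall a x y z, phi z (a *: x + y) = a * phi z x + phi z y) ->
 (forall x, x \in W -> phi x x = 0) ->
 (forall y, y \in W -> (forall x, x \in W -> phi x y = 0) -> y = 0) ->
 ~~ odd (\dim W).
Proof.
move=> hL hR halt hnd; apply/negP => od.
have phi0l z : phi 0 z = 0.
  have e := hL 1 0 0 z; rewrite scaler0 addr0 mul1r in e.
  by apply: (addrI (phi 0 z)); rewrite addr0 -e.
have phi0r z : phi z 0 = 0.
  have e := hR 1 0 0 z; rewrite scaler0 addr0 mul1r in e.
  by apply: (addrI (phi z 0)); rewrite addr0 -e.
have phiDl x y z : phi (x + y) z = phi x z + phi y z.
  by have := hL 1 x y z; rewrite scale1r mul1r.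
have phiDr x y z : phi z (x + y) = phi z x + phi z y.
  by have := hR 1 x y z; rewrite scale1r mul1r.
have sumL (d : nat) (c : 'I_d -> F) (f : 'I_d -> vT) z :
    phi (\sum_(i < d) c i *: f i) z = \sum_(i < d) c i * phi (f i) z.
  apply: (big_ind2 (fun u w => phi u z = w)) => //.
    by move=> x1 x2 y1 y2 <- <-; rewrite phiDl.
  by move=> i _; rewrite -[_ *: _]addr0 hL phi0l addr0.
have sumR (d : nat) (c : 'I_d -> F) (f : 'I_d -> vT) z :
    phi z (\sum_(i < d) c i *: f i) = \sum_(i < d) c i * phi z (f i).
  apply: (big_ind2 (fun u w => phi z u = w)) => //.
    by move=> x1 x2 y1 y2 <- <-; rewrite phiDr.
  by move=> i _; rewrite -[_ *: _]addr0 hR phi0r addr0.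
have anti x y : x \in W -> y \in W -> phi y x = - phi x y.
  move=> xW yW; have := halt _ (memvD xW yW).
  rewrite phiDl !phiDr (halt x) // (halt y) // add0r addr0.
  by move/eqP; rewrite addr_eq0 => /eqP ->; rewrite opprK.
pose d := \dim W; pose e := vbasis W.
have eW (a : 'I_d) : e`_a \in W.
  by apply: vbasis_mem; apply: mem_nth; rewrite size_tuple ltn_ord.
pose G : 'M[F]_d := \matrix_(a, c) phi e`_a e`_c.
have dG : \det G^T == 0.
  rewrite det_tr (det_alt_odd od) // => [i|i j]; rewrite !mxE; [exact: halt | exact: anti].
have /det0P [v nv vG] := dG.
pose y := \sum_(c < d) v 0 c *: e`_c.
have yW : y \in W by apply: memv_suml => c _; apply: memvZ.
have y0 : y = 0.
  apply: hnd => // x xW; rewrite (coord_vbasis xW) sumL; apply: big1 => a _.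
  rewrite sumR; have := congr1 (fun M : 'M_(1, d) => M 0 a) vG; rewrite !mxE => h.
  rewrite [X in _ * X](_ : _ = 0) ?mulr0 // -[X in _ = X]h.
  by apply: eq_bigr => c _; rewrite !mxE.
case/negP: nv; apply/eqP/rowP => c; rewrite mxE.
have /freeP fP := basis_free (vbasisP W).
exact: (fP (fun c => v 0 c) y0 c).
Qed.

Lemma no_k_even (F : finFieldType) (n m : nat) (b : m.-tuple 'rV[F]_n)
  (H P P1 P2 : {vspace 'rV[F]_n}) :
  ~~ odd m -> basis_of H b -> \dim H = m ->
  is_generator H b P -> is_generator H b P1 -> is_generator H b P2 ->
  (P1 :&: P = 0)%VS -> (P2 :&: P = 0)%VS -> \dim (P1 :&: P2) = 1%N ->
  ~~ odd m./2 -> False.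
Proof.
move=> om hb dH [sP [dP qP]] [sP1 [dP1 q1]] [sP2 [dP2 q2]] c1 c2 d12 ok.
have mk : m = (m./2 + m./2)%N by rewrite addnn -{1}(odd_double_half m) (negbTE om).
have sum_eq (U : {vspace 'rV[F]_n}) : (U <= H)%VS -> \dim U = m./2 ->
    (U :&: P = 0)%VS -> (P + U)%VS = H.
  move=> sU dU cU; apply/eqP; rewrite eqEdim subv_add sP sU /=.
  by rewrite dimv_disjoint_sum ?dP ?dU ?dH -?mk // capvC.
have h1 := sum_eq _ sP1 dP1 c1; have h2 := sum_eq _ sP2 dP2 c2.
have c2' : (P :&: P2 = 0)%VS by rewrite capvC.
pose sg := daddv_pi P P2; pose rh := daddv_pi P2 P.
have dec y : y \in H -> sg y + rh y = y.
  by move=> yH; apply: daddv_pi_add => //; rewrite h2.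
pose W := (P1 :\: P2)%VS.
have dW : (\dim W).+1 = m./2.
  by rewrite -dP1 -(dimv_cap_compl P1 P2) d12.
have : ~~ odd (\dim W).
  apply: (@alt_even _ _ W (fun x y => betaQ b x (sg y))).
  - by move=> a x y z; apply: betaL.
  - by move=> a x y z; rewrite linearP /=; apply: betaR.
  - move=> x xW; have xP1 : x \in P1 := subvP (diffvSl P1 P2) x xW.
    have xH := subvP sP1 _ xP1.
    have sgP : sg x \in P := memv_pi _ _ _.
    have rhP : rh x \in P2 := memv_pi _ _ _.
    have e := dec x xH.
    rewrite -{1}e betaDl (ts_beta qP sgP sgP) add0r.
    have := QD b (rh x) (sg x); rewrite [rh x + _]addrC e (q1 _ xP1) (q2 _ rhP) (qP _ sgP).
    by rewrite !add0r => h; rewrite -h.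
  - move=> y yW hy; have yP1 : y \in P1 := subvP (diffvSl P1 P2) y yW.
    have yH := subvP sP1 _ yP1.
    have hall h : h \in H -> betaQ b h (sg y) = 0.
      rewrite -h1 => /memv_addP [p pP [x1 x1P1 ->]].
      rewrite betaDl (ts_beta qP pP (memv_pi _ _ _)) add0r.
      move: x1P1; rewrite -(addv_diff_cap P1 P2) => /memv_addP [w' w'W [c cC ->]].
      rewrite betaDl (hy _ w'W) add0r.
      have -> : sg y = y - rh y by rewrite -{2}(dec y yH) addrK.
      have [cP1 cP2] := memv_capP cC.
      by rewrite betaBr (ts_beta q1 cP1 yP1) (ts_beta q2 cP2 (memv_pi _ _ _)) subrr.
    have s0 : sg y = 0 := beta_nondeg om hb (subvP sP _ (memv_pi _ _ _)) hall.
    have yP2 : y \in P2 by rewrite -(dec y yH) s0 add0r memv_pi.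
    apply/eqP; rewrite -memv0 -(capv_diff P1 P2); apply/memv_capP; split => //.
by move: ok; rewrite -dW /= negbK => ->.
Qed.

Theorem mainTheorem6 (F : finFieldType) (r : nat)
    (H : {vspace 'rV[F]_(r.+2)}) (b : r.+1.-tuple 'rV[F]_(r.+2))
    (Pi : {vspace 'rV[F]_(r.+2)})
    (S : 'I_(#|F| ^ (r.+1)./2) -> {vspace 'rV[F]_(r.+2)}) :
  odd r ->
  hyperbolic_avsp H b Pi S ->
  (forall i j, i != j ->
     \dim (S i :&: S j)%VS = 1%N /\
     \dim ((S i :&: H) :&: (S j :&: H))%VS = 1%N)
  /\ (r %% 4 <> 3)%N.
Proof.
move=> ro [_ [dH [hb [gPi [inj [notH [part [shape cond]]]]]]]].
set k := (r.+1)./2 in shape cond *.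
have rk : r.+1 = (k + k)%N.
  by rewrite addnn -{1}(odd_double_half r.+1) /= ro.
have P1 : forall i j, i != j ->
     \dim (S i :&: S j)%VS = 1%N /\ \dim ((S i :&: H) :&: (S j :&: H))%VS = 1%N.
  move=> i j ij; have [d1 [d2 _]] := cond i j ij.
  have sub : (S i :&: S j <= (S i :&: H) :&: (S j :&: H))%VS.
    apply/subvP => v /memv_capP [vi vj]; case vH: (v \in H).
      by rewrite !memv_cap vi vj vH.
    have [l [_ ul]] := part v (negbT vH).
    by move: ij; rewrite -(ul i vi) -(ul j vj) eqxx.
  have ge1 : (1 <= \dim (S i :&: S j))%N.
    have := dimv_sum_cap (S i) (S j); have := dimvS (subvf (S i + S j)%VS).
    rewrite dimvf /dim /= (shape i).1 (shape j).1.
    move: rk; rewrite mul1n; lia.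
  split; first by apply/eqP; rewrite eqn_leq d1 ge1.
  by apply/eqP; rewrite eqn_leq d2 (leq_trans ge1 (dimvS sub)).
split => // r3.
have kev : ~~ odd k.
  have e : r.+1 = ((r %/ 4).+1).*2.*2.
    by rewrite {1}(divn_eq r 4) r3 -!mul2n; lia.
  by rewrite /k e doubleK odd_double.
have k0 : (0 < k)%N by move: rk; lia.
have N1 : (1 < #|F| ^ k)%N.
  by rewrite -{1}(expn0 #|F|) ltn_exp2l ?card_finNzRing_gt1.
pose i0 := Ordinal (ltn_trans (ltnSn 0) N1); pose i1 := Ordinal N1.
have ne : i0 != i1 by [].
have [sh0 [g0 c0]] := shape i0; have [sh1 [g1 c1]] := shape i1.
apply: (@no_k_even F r.+2 r.+1 b H Pi (S i0 :&: H) (S i1 :&: H)) => //.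
- by rewrite /= ro.
- by case: (P1 i0 i1 ne).
Qed.
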